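(* Let $\{X_i:i\in I\}$ be a collection of random variables on $\Omega$ and let $P$ assign to each $X_i$ an extended-real marginal prevision $P(X_i)$. Then $P$ is extended-coherent if and only if the collection $\{P(X_i):i\in I\}$ is coherent$_1$.
   Context: Let $\Omega$ be a nonempty set; random variables are real-valued functions on $\Omega$. A marginal prevision $P(X)$ is an extended real number. Coherence$_1$ (marginal case): $\{P(X_i):i\in I\}$ is coherent$_1$ if for every finite $\{i_1,\dots,i_n\}\subseteq I$, all real $\alpha_1,\dots,\alpha_n$ with $\alpha_j\ge0$ whenever $P(X_{i_j})=+\infty$ and $\alpha_j\le 0$ whenever $P(X_{i_j})=-\infty$, and all real $c_1,\dots,c_n$ with $c_j=P(X_{i_j})$ whenever $P(X_{i_j})$ is finite, we have $\sup_\omega\sum_{j=1}^n\alpha_j[X_{i_j}(\omega)-c_j]\ge 0$. Extended-coherence: $P$ is extended-coherent if \[\inf_{\omega\in\Omega}\sum_{j=1}^n\alpha_jX_{i_j}(\omega)\le\sum_{j=1}^n\alpha_jP(X_{i_j})\le\sup_{\omega\in\Omega}\sum_{j=1}^n\alpha_jX_{i_j}(\omega)\] for every finite $n$, all $i_1,\dots,i_n\in I$, and all real $\alpha_1,\dots,\alpha_n$ such that all infinite terms of the form $\alpha_jP(X_{i_j})$ have the same sign. *)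

(* Defs.v *)
From mathcomp Require Import all_boot all_order all_algebra.
From mathcomp Require Import all_classical all_reals ereal.
Set Implicit Arguments. Unset Strict Implicit. Unset Printing Implicit Defensive.
Import Order.TTheory GRing.Theory Num.Theory.
Local Open Scope classical_set_scope.
Local Open Scope ring_scope.
Local Open Scope ereal_scope.

(* Coherence_1 (marginal case).  A finite subset {i_1,...,i_n} of I is
   encoded by an injective map idx : 'I_n -> I. *)
Definition coherent1 (R : realType) (Omega I : Type)
  (X : I -> Omega -> R) (P : I -> \bar R) : Prop :=
  forall (n : nat) (idx : 'I_n -> I), injective idx ->
  forall (alpha c : 'I_n -> R),
    (forall j, P (idx j) = +oo -> (0 <= alpha j)%R) ->
    (forall j, P (idx j) = -oo -> (alpha j <= 0)%R) ->
    (forall j, P (idx j) \is a fin_num -> P (idx j) = (c j)%:E) ->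
    0 <= ereal_sup (range (fun w : Omega =>
            (\sum_(j < n) alpha j * (X (idx j) w - c j))%R%:E)).

(* Indices i_1,...,i_n (repetitions allowed) are
   encoded by idx : 'I_n -> I.  The side condition says that the infinite
   terms alpha_j P(X_{i_j}) all have the same sign, i.e. not both a +oo
   and a -oo term occur.  (Convention of \bar R: 0 * (+-oo) = 0.) *)
Definition extended_coherent (R : realType) (Omega I : Type)
  (X : I -> Omega -> R) (P : I -> \bar R) : Prop :=
  forall (n : nat) (idx : 'I_n -> I) (alpha : 'I_n -> R),
    ~ ((exists j, (alpha j)%:E * P (idx j) = +oo) /\
       (exists k, (alpha k)%:E * P (idx k) = -oo)) ->
    ereal_inf (range (fun w : Omega =>
                 (\sum_(j < n) alpha j * X (idx j) w)%R%:E))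
      <= \sum_(j < n) (alpha j)%:E * P (idx j)
    /\ \sum_(j < n) (alpha j)%:E * P (idx j)
      <= ereal_sup (range (fun w : Omega =>
                 (\sum_(j < n) alpha j * X (idx j) w)%R%:E)).

(* Main.v *)
Require Import Defs.
From mathcomp Require Import all_boot all_order all_algebra.
From mathcomp Require Import all_classical all_reals ereal.
Set Implicit Arguments. Unset Strict Implicit. Unset Printing Implicit Defensive.
Import Order.TTheory GRing.Theory Num.Theory.
Local Open Scope classical_set_scope.
Local Open Scope ring_scope.
Local Open Scope ereal_scope.
Section Sec.
Variables (R : realType) (Omega : Type).
Lemma sup_shift1 (g : Omega -> R) a :
  0 <= ereal_sup (range (fun w => (g w - a)%R%:E)) ->
  a%:E <= ereal_sup (range (fun w => (g w)%:E)).
Proof.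
move=> H.
have : ereal_sup (range (fun w => (g w - a)%R%:E)) <= ereal_sup (range (fun w => (g w)%:E)) - a%:E.
  apply: ge_ereal_sup => _ [w _ <-].
  rewrite leeBrDr// -EFinD subrK; apply: ereal_sup_ubound; by exists w.
by move=> /(le_trans H); rewrite sube_ge0.
Qed.
Lemma sup_shift2 (g : Omega -> R) a :
  a%:E <= ereal_sup (range (fun w => (g w)%:E)) ->
  0 <= ereal_sup (range (fun w => (g w - a)%R%:E)).
Proof.
move=> H.
have : ereal_sup (range (fun w => (g w)%:E)) <= ereal_sup (range (fun w => (g w - a)%R%:E)) + a%:E.
  apply: ge_ereal_sup => _ [w _ <-].
  rewrite -leeBlDr// -EFinB; apply: ereal_sup_ubound; by exists w.
move=> /(le_trans H). by rewrite -leeBlDr// subee.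
Qed.
Lemma coh_any (I : Type) (X : I -> Omega -> R) (P : I -> \bar R) (h : I -> R) :
  coherent1 X P -> (forall i, P i \is a fin_num -> P i = (h i)%:E) ->
  forall n (idx : 'I_n -> I) (alpha : 'I_n -> R),
   (forall j, P (idx j) = +oo -> (0 <= alpha j)%R) ->
   (forall j, P (idx j) = -oo -> (alpha j <= 0)%R) ->
   0 <= ereal_sup (range (fun w =>
      (\sum_(j < n) alpha j * (X (idx j) w - h (idx j)))%R%:E)).
Proof.
move=> Hc Hh n idx alpha Hp Hm.
pose rep (j : 'I_n) : 'I_n := [arg min_(k < j | `[< idx k = idx j >]) (k : nat)].
have repP j : idx (rep j) = idx j /\ forall k, idx k = idx j -> (rep j <= k)%N.
  rewrite /rep; case: arg_minnP => [|r /asboolP Hr Hmin]; first exact/asboolP.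
  by split => // k Hk; apply: Hmin; apply/asboolP.
have repE j k : idx j = idx k -> rep j = rep k.
  move=> E; apply: val_inj; apply/eqP; rewrite eqn_leq.
  rewrite (repP j).2 ?(repP k).2 //; [by rewrite (repP j).1 | by rewrite (repP k).1].
have reprep j : rep (rep j) = rep j by apply: repE; exact: (repP j).1.
pose S : {set 'I_n} := finset (fun j => rep j == j).
pose beta s := (\sum_(j | rep j == s) alpha j)%R.
have key w : (\sum_(j < n) alpha j * (X (idx j) w - h (idx j)))%R =
   (\sum_(i < #|S|) beta (enum_val i) * (X (idx (enum_val i)) w - h (idx (enum_val i))))%R.
  rewrite -(big_enum_val (fun s => beta s * (X (idx s) w - h (idx s)))%R).
  rewrite (partition_big rep (mem S)) /=; last first.
    by move=> i _; rewrite /S finset.in_set; apply/eqP; exact: reprep.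
  idtac.
  apply: eq_bigr => s Hs; rewrite /beta big_distrl /=.
  by apply: eq_bigr => j /eqP <-; rewrite (repP j).1.
under eq_fun do rewrite key.
have memS (i : 'I_#|S|) : rep (enum_val i) = enum_val i.
  by have := enum_valP i; rewrite /S finset.in_set => /eqP.
apply: (Hc _ (fun i => idx (enum_val i))).
- move=> i i' E; apply: enum_val_inj.
  by rewrite -(memS i) -(memS i'); apply: repE.
- move=> i Hi; apply: sumr_ge0 => j /eqP Hj; apply: Hp.
  by rewrite -(repP j).1 Hj.
- move=> i Hi; rewrite -oppr_ge0 -sumrN; apply: sumr_ge0 => j /eqP Hj.
  by rewrite oppr_ge0; apply: Hm; rewrite -(repP j).1 Hj.
- by move=> i; apply: Hh.
Qed.
Lemma UP (I : Type) (X : I -> Omega -> R) (P : I -> \bar R) :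
  coherent1 X P -> forall n (idx : 'I_n -> I) (alpha : 'I_n -> R),
  \sum_(j < n) (alpha j)%:E * P (idx j)
      <= ereal_sup (range (fun w : Omega =>
                 (\sum_(j < n) alpha j * X (idx j) w)%R%:E)).
Proof.
move=> Hc n idx alpha.
case: (pselect (exists k, (alpha k)%:E * P (idx k) = -oo)) => [[k Hk]|Hno].
  have -> : \sum_(j < n) (alpha j)%:E * P (idx j) = -oo.
    by apply/esum_eqNyP; exists k; split => //; exact: mem_index_enum.
  by rewrite leNye.
have Hp j : P (idx j) = +oo -> (0 <= alpha j)%R.
  move=> E; rewrite leNgt; apply/negP => Hlt; apply: Hno; exists j.
  by rewrite E mulry ltr0_sg // mulN1e.
have Hm j : P (idx j) = -oo -> (alpha j <= 0)%R.
  move=> E; rewrite leNgt; apply/negP => Hlt; apply: Hno; exists j.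
  by rewrite E mulrNy gtr0_sg // mul1e.
pose e i : R := match P i with +oo => 1%R | -oo => (-1)%R | _ => 0%R end.
have He j : (0 <= alpha j * e (idx j))%R.
  rewrite /e; case E: (P (idx j)) => [p| |]; first by rewrite mulr0.
  - by rewrite mulr1; apply: Hp.
  - by rewrite mulrN1 oppr_ge0; apply: Hm.
have Ht t : (\sum_(j < n) alpha j * (fine (P (idx j)) + t * e (idx j)))%R%:E
   <= ereal_sup (range (fun w : Omega => (\sum_(j < n) alpha j * X (idx j) w)%R%:E)).
  apply: sup_shift1.
  have := @coh_any I X P (fun i => fine (P i) + t * e i)%R Hc _ n idx alpha Hp Hm.
  have -> : (fun w => (\sum_(j < n) alpha j * (X (idx j) w - (fine (P (idx j)) + t * e (idx j))))%R%:E)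
    = (fun w => (\sum_(j < n) alpha j * X (idx j) w - \sum_(j < n) alpha j * (fine (P (idx j)) + t * e (idx j)))%R%:E).
    apply/funext => w; congr (_%:E); rewrite -sumrB; apply: eq_bigr => j _.
    by rewrite mulrBr.
  apply.
  move=> i; rewrite /e; case: (P i) => [p| |] //= _.
  by rewrite mulr0 addr0.
have Hsplit t : (\sum_(j < n) alpha j * (fine (P (idx j)) + t * e (idx j)) =
   \sum_(j < n) alpha j * fine (P (idx j)) + t * \sum_(j < n) alpha j * e (idx j))%R.
  rewrite mulr_sumr -big_split; apply: eq_bigr => j _.
  by rewrite mulrDr mulrCA.
set D := (\sum_(j < n) alpha j * e (idx j))%R in Hsplit.
case: (ltP 0%R D) => HD.
  suff -> : ereal_sup (range (fun w : Omega => (\sum_(j < n) alpha j * X (idx j) w)%R%:E)) = +oo.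
    by rewrite leey.
  apply/eqyP => A _.
  set K := (\sum_(j < n) alpha j * fine (P (idx j)))%R in Hsplit.
  have := Ht ((A - K) / D)%R; rewrite Hsplit.
  by rewrite divfK ?lt0r_neq0 // addrC subrK.
have D0 : D = 0%R by apply/le_anti; rewrite HD sumr_ge0.
have Hz : forall j, (alpha j * e (idx j) = 0)%R.
  move=> j; have := @psumr_eq0P _ _ predT (fun j => alpha j * e (idx j))%R.
  by apply => // i _; apply: He.
apply: le_trans (Ht 0%R); rewrite -sumEFin; apply: lee_sum => j _.
have := Hz j; rewrite /e; case E: (P (idx j)) => [p| |] /=.
- by rewrite mul0r addr0 EFinM.
- by rewrite mulr1 => ->; rewrite mul0e mul0r.
- by rewrite mulrN1 => /eqP; rewrite oppr_eq0 => /eqP ->; rewrite mul0e mul0r.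
Qed.
End Sec.

Theorem lemma3p1 (R : realType) (Omega I : Type) (HOmega : inhabited Omega)
  (X : I -> Omega -> R) (P : I -> \bar R) :
  extended_coherent X P <-> coherent1 X P.
Proof.
have term j c a : (forall p, P j = p%:E -> p = c) -> (P j = +oo -> (0 <= a)%R) ->
    (P j = -oo -> (a <= 0)%R) -> (a * c)%:E <= a%:E * P j.
  move=> Hf Hp Hm; case E: (P j) => [p| |].
  - by rewrite (Hf p) // EFinM.
  - have := Hp E; rewrite le_eqVlt => /orP[/eqP <-|a0].
      by rewrite mul0r mul0e.
    by rewrite mulry gtr0_sg // mul1e leey.
  - have := Hm E; rewrite le_eqVlt => /orP[/eqP ->|a0].
      by rewrite mul0r mul0e.
    by rewrite mulrNy ltr0_sg // mulN1e leey.
split.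
- move=> Hext n idx _ alpha c Hp Hm Hf.
  have Hterm j : (alpha j * c j)%:E <= (alpha j)%:E * P (idx j).
    apply: term; [|exact: Hp|exact: Hm].
    by move=> p E; have := Hf j; rewrite E => /(_ isT) [].
  have H : \sum_(j < n) (alpha j)%:E * P (idx j)
      <= ereal_sup (range (fun w : Omega =>
                 (\sum_(j < n) alpha j * X (idx j) w)%R%:E)).
    apply: (Hext n idx alpha _).2 => -[_ [k Hk]].
    by have := Hterm k; rewrite Hk leeNy_eq.
  have -> : (fun w => (\sum_(j < n) alpha j * (X (idx j) w - c j))%R%:E)
    = (fun w => (\sum_(j < n) alpha j * X (idx j) w - \sum_(j < n) alpha j * c j)%R%:E).
    apply/funext => w; congr (_%:E); rewrite -sumrB; apply: eq_bigr => j _.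
    by rewrite mulrBr.
  apply: sup_shift2; apply: le_trans H; rewrite -sumEFin.
  by apply: lee_sum => j _.
- move=> Hc n idx alpha Hside; split; last exact: UP.
  have := UP Hc idx (fun j => - alpha j)%R.
  have -> : \sum_(j < n) (- alpha j)%R%:E * P (idx j)
       = - \sum_(j < n) (alpha j)%:E * P (idx j).
    under eq_bigr do rewrite EFinN mulNe.
    rewrite sumeN // => i j _ _; rewrite /adde_def.
    apply/andP; split; apply/negP => /andP[/eqP a /eqP b]; apply: Hside; eauto.
  have -> : (fun w => (\sum_(j < n) - alpha j * X (idx j) w)%R%:E)
      = (fun w => - (\sum_(j < n) alpha j * X (idx j) w)%R%:E).
    apply/funext => w; rewrite -EFinN -sumrN; congr (_%:E).
    by apply: eq_bigr => j _; rewrite mulNr.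
  rewrite /ereal_inf leeNl.
  have -> : range (fun w => - (\sum_(j < n) alpha j * X (idx j) w)%R%:E)
     = -%E @` range (fun w => (\sum_(j < n) alpha j * X (idx j) w)%R%:E) => //.
  apply/seteqP; split => x.
    by move=> [w _ <-]; exists ((\sum_(j < n) alpha j * X (idx j) w)%R%:E) => //; exists w.
  by move=> [_ [w _ <-] <-]; exists w.
Qed.
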